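(* Let $\Gamma=\sum_{j=1}^k w_j\delta_{\mu_j}$ be a $k$-atomic distribution on $\mathbb R^d$, and let $\Sigma=\mathbb E_{U\sim\Gamma}[UU^\top]=\sum_{j=1}^k w_j\mu_j\mu_j^\top$ with eigenvalues $\lambda_1\ge\dots\ge\lambda_d$. Let $\Sigma'$ be any symmetric $d\times d$ matrix and $\Pi'_r$ the orthogonal projection matrix onto the span of the top $r$ eigenvectors of $\Sigma'$. Then $$W_2^2(\Gamma,\Gamma_{\Pi'_r})\le k\big(\lambda_{r+1}+2\|\Sigma-\Sigma'\|_2\big).$$
   Context: For a $d\times d$ matrix $A$, $\Gamma_A$ denotes the law of $AU$ with $U\sim\Gamma$. $\|\cdot\|_2$ of a matrix is the spectral (operator) norm. $W_2(\Gamma,\Gamma')=(\inf\mathbb E\|U-U'\|_2^2)^{1/2}$ over couplings. Set $\lambda_{d+1}=0$ if $r=d$. *)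

(* Defs.v *)
From HB Require Import structures.
From mathcomp Require Import all_boot all_order all_algebra.
Set Implicit Arguments. Unset Strict Implicit. Unset Printing Implicit Defensive.
Import Order.TTheory GRing.Theory Num.Theory.
Local Open Scope ring_scope.

Definition vnorm (R : rcfType) (d : nat) (v : 'cV[R]_d) : R :=
  Num.sqrt (\sum_(i < d) (v i 0) ^+ 2).

Definition is_lub (R : realFieldType) (S : R -> Prop) (s : R) : Prop :=
  (forall x, S x -> x <= s) /\ (forall b, (forall x, S x -> x <= b) -> s <= b).
Definition is_glb (R : realFieldType) (S : R -> Prop) (s : R) : Prop :=
  (forall x, S x -> s <= x) /\ (forall b, (forall x, S x -> b <= x) -> b <= s).

Definition spectral_norm_is (R : rcfType) (d : nat) (A : 'M[R]_d) (s : R) : Prop :=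
  is_lub (fun y => exists v : 'cV[R]_d, vnorm v = 1 /\ y = vnorm (A *m v)) s.

(* A finitely supported distribution sum_i w i delta_(a i) on R^d is given by
   weights w : 'I_k -> R and atoms a : 'I_k -> 'cV_d (atoms may repeat).
   A coupling of sum_i w1 i delta_(a i) and sum_j w2 j delta_(b j) is a finitely
   supported measure on R^d x R^d (supported on supp x supp), written as a
   nonnegative mass p i j on the point (a i, b j), whose marginals are the two
   measures (checked pointwise on each point x of R^d). *)
Definition is_coupling (R : rcfType) (d k1 k2 : nat)
  (w1 : 'I_k1 -> R) (a : 'I_k1 -> 'cV[R]_d)
  (w2 : 'I_k2 -> R) (b : 'I_k2 -> 'cV[R]_d)
  (p : 'I_k1 -> 'I_k2 -> R) : Prop :=
  (forall i j, 0 <= p i j) /\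
  (forall x : 'cV[R]_d,
      \sum_(i < k1 | a i == x) \sum_(j < k2) p i j = \sum_(i < k1 | a i == x) w1 i) /\
  (forall y : 'cV[R]_d,
      \sum_(j < k2 | b j == y) \sum_(i < k1) p i j = \sum_(j < k2 | b j == y) w2 j).

Definition W2sq_is (R : rcfType) (d k1 k2 : nat)
  (w1 : 'I_k1 -> R) (a : 'I_k1 -> 'cV[R]_d)
  (w2 : 'I_k2 -> R) (b : 'I_k2 -> 'cV[R]_d) (m : R) : Prop :=
  is_glb (fun c => exists p, is_coupling w1 a w2 b p /\
            c = \sum_(i < k1) \sum_(j < k2) p i j * vnorm (a i - b j) ^+ 2) m.

(* atoms of Gamma_A = law of A U, U ~ sum_j w j delta_(mu j): same weights,
   atoms A mu_j. *)
Definition push_atoms (R : rcfType) (d k : nat) (A : 'M[R]_d)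
  (mu : 'I_k -> 'cV[R]_d) : 'I_k -> 'cV[R]_d := fun j => A *m mu j.

Definition second_moment (R : rcfType) (d k : nat) (w : 'I_k -> R)
  (mu : 'I_k -> 'cV[R]_d) : 'M[R]_d :=
  \sum_(j < k) w j *: (mu j *m (mu j)^T).

(* lam 0 >= lam 1 >= ... >= lam (d-1) are the eigenvalues of A with multiplicity
   (lam i is lambda_(i+1) of the paper). *)
Definition eigenvalues_sorted (R : rcfType) (d : nat) (A : 'M[R]_d)
  (lam : nat -> R) : Prop :=
  char_poly A = \prod_(i < d) ('X - (lam i)%:P) /\
  (forall i j : nat, (i <= j)%N -> (j < d)%N -> lam j <= lam i).

(* lambda_(r+1), with the convention lambda_(d+1) = 0 *)
Definition lam_next (R : rcfType) (d : nat) (lam : nat -> R) (r : nat) : R :=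
  if (r < d)%N then lam r else 0.

Definition top_eig_proj (R : rcfType) (d : nat) (A : 'M[R]_d) (r : nat)
  (P : 'M[R]_d) : Prop :=
  exists (Q : 'M[R]_d) (lam : nat -> R),
    Q^T *m Q = 1%:M /\
    (forall i : 'I_d, A *m col i Q = lam i *: col i Q) /\
    (forall i j : 'I_d, (i <= j)%N -> lam j <= lam i) /\
    P = \sum_(i < d | (i < r)%N) col i Q *m (col i Q)^T.

(* Main.v *)
Require Import Defs.
From HB Require Import structures.
From mathcomp Require Import all_boot all_order all_algebra.
From mathcomp Require Import complex zify ring lra.
Import Order.TTheory GRing.Theory Num.Theory.
Local Open Scope ring_scope.

Module Inertia.
Set Implicit Arguments. Unset Strict Implicit. Unset Printing Implicit Defensive.
Import Order.TTheory GRing.Theory Num.Theory Num.Def.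
Local Open Scope ring_scope.
Local Open Scope sesquilinear_scope.

Lemma char_poly_conj (F : fieldType) n (P A : 'M[F]_n) :
  P \in unitmx -> char_poly (invmx P *m A *m P) = char_poly A.
Proof.
move=> Pu; rewrite /char_poly /char_poly_mx !map_mxM.
set Ip := map_mx polyC (invmx P); set Pp := map_mx polyC P.
have IPp : Ip *m Pp = 1%:M by rewrite -map_mxM mulVmx // map_mx1.
have {1}-> : ('X%:M : 'M_n) = Ip *m 'X%:M *m Pp.
  by rewrite scalar_mxC -mulmxA IPp mulmx1.
rewrite -mulmxBl -mulmxBr !det_mulmx mulrAC -det_mulmx IPp det1 mul1r.
done.
Qed.

Lemma rank_sum_le (F : fieldType) m n I (r : seq I) (P : pred I)
  (G : I -> 'M[F]_(m, n)) :
  (\rank (\sum_(i <- r | P i) G i)%R <= \sum_(i <- r | P i) \rank (G i))%N.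
Proof.
elim/big_rec2: _ => [|i y A _ H]; first by rewrite mxrank0.
by apply: leq_trans (mxrank_add _ _) _; rewrite leq_add2l.
Qed.

Lemma rank_diag_le (F : fieldType) n (v : 'rV[F]_n) :
  (\rank (diag_mx v) <= \sum_(i < n) (v 0%R i != 0%R))%N.
Proof.
rewrite diag_mx_sum_delta; apply: leq_trans (rank_sum_le _ _ _) _.
apply: leq_sum => i _; have [->|nz] := eqVneq (v 0 i) 0.
  by rewrite scale0r mxrank0.
by rewrite (mxrank_scale_nz _ nz) mxrank_delta.
Qed.

Lemma sum_lt_le t N : (\sum_(i < N) ((i : nat) < t) <= t)%N.
Proof.
elim: N => [|N IH]; first by rewrite big_ord0.
rewrite big_ord_recr /=; case: ltnP => //= hN; last by rewrite addn0.
have : (\sum_(i < N) ((i : nat) < t) <= N)%N.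
  rewrite -[X in (_ <= X)%N](card_ord N) -sum1_card.
  by apply: leq_sum => i _; exact: leq_b1.
by move=> h; rewrite addn1; apply: leq_ltn_trans hN.
Qed.

Lemma sum_count_ord N (a : pred 'I_N) : (\sum_(i < N) a i)%N = count a (enum 'I_N).
Proof. rewrite -sum1_count big_enum_cond [RHS]big_mkcond /=; apply: eq_bigr => i _. by case: (a i). Qed.

Lemma inertia (R : rcfType) n (B : 'M[R]_n) (lam : nat -> R) (t : nat) (m : R)
  p (S : 'M[R]_(p, n)) :
  B^T = B -> char_poly B = \prod_(i < n) ('X - (lam i)%:P) ->
  (forall i : 'I_n, (t <= i)%N -> lam i < m) -> (t < \rank S)%N ->
  (forall e : 'rV_p, let x := e *m S in
      m * (x *m x^T) 0 0 <= (x *m B *m x^T) 0 0) -> False.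
Proof.
case: n => [|n] in B S *.
  by move=> _ _ _; rewrite ltnNge (leq_trans (rank_leq_col S) (leq0n t)).
move=> Bsym charB lamlt rankS Spos.
pose f := real_complex R.
pose q := \prod_(i < n.+1 | (t <= i)%N) ('X - (lam i)%:P).
pose K := kermxpoly B q.
pose BC := map_mx f B.
have fconj : forall x : R, conjC (f x) = f x.
  by move=> x; rewrite conj_Creal // complex_real.
have BCconj : map_mx conjC BC = BC.
  by apply/matrixP => i j; rewrite !mxE fconj.
have hBC : BC \is hermsymmx.
  apply/is_hermitianmxP; rewrite expr0 scale1r.
  by rewrite /BC map_trmx Bsym BCconj.
pose P := spectralmx BC; pose D := spectral_diag BC.
have eBC : BC = invmx P *m diag_mx D *m P.
  exact/orthomx_spectralP/hermitian_normalmx.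
have Pun : P \is unitarymx by apply: spectral_unitarymx.
have Pu : P \in unitmx by apply: unitarymx_unit.
have iP : invmx P = P ^t* by apply: invmx_unitary.
pose qC := map_poly f q.
have eqC : qC = \prod_(i < n.+1 | (t <= i)%N) ('X - (f (lam i))%:P).
  by rewrite /qC rmorph_prod; apply: eq_bigr => i _; rewrite rmorphB /= map_polyX map_polyC.
have rootqC : forall z, qC.[z] = 0 -> exists2 i : 'I_n.+1, (t <= i)%N & z = f (lam i).
  move=> z; rewrite eqC horner_prod => /eqP; rewrite prodf_seq_eq0; case/hasP => i.
  by rewrite mem_index_enum /= => _ /andP [ti]; rewrite !hornerE subr_eq0 => /eqP ->; exists i.
have hperm : perm_eq [seq D 0 i | i <- enum 'I_n.+1] [seq f (lam i) | i : 'I_n.+1 <- enum 'I_n.+1].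
  apply: prod_XsubC_eq; rewrite !big_map.
  idtac.
  transitivity (char_poly (diag_mx D)).
    rewrite char_poly_trig ?diag_mx_is_trig //.
    by apply: eq_bigr => i _; rewrite mxE eqxx mulr1n.
  rewrite -(char_poly_conj _ Pu) -eBC /BC -map_char_poly charB rmorph_prod.
  by apply: eq_bigr => i _; rewrite rmorphB /= map_polyX map_polyC.
have rankK : (n.+1 - t <= \rank K)%N.
  rewrite -(mxrank_map f) /K map_kermxpoly -/BC -/qC /kermxpoly mxrank_ker.
  apply: leq_sub2l.
  rewrite eBC horner_mx_uconjC //.
  apply: leq_trans (mxrankM_maxl _ _) _; apply: leq_trans (mxrankM_maxr _ _) _.
  rewrite horner_mx_diag; apply: leq_trans (rank_diag_le _) _.
  have -> : (\sum_(i < n.+1) ((map_mx (horner qC) D) 0%R i != 0%R))%N =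
     count (fun z => qC.[z] != 0) [seq D 0 i | i <- enum 'I_n.+1].
    by rewrite count_map -sum_count_ord; apply: eq_bigr => i _; rewrite mxE.
  rewrite (permP hperm) count_map -sum_count_ord.
  apply: leq_trans (sum_lt_le t n.+1); apply: leq_sum => i _.
  have [it|ti] := ltnP i t; first exact: leq_b1.
  rewrite leqn0 eqb0 /= negbK eqC horner_prod (bigD1 i) //= !hornerE subrr mul0r.
  by rewrite eqxx.
have negK : forall x : 'rV[R]_n.+1, (x <= K)%MS -> x != 0 ->
   (x *m B *m x^T) 0 0 < m * (x *m x^T) 0 0.
  move=> x xK xn0.
  pose xC := map_mx f x.
  have hx : xC *m horner_mx BC qC = 0.
    rewrite /xC /BC /qC -map_horner_mx -map_mxM; apply/eqP; rewrite map_mx_eq0 -sub_kermx.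
    exact: xK.
  pose c := xC *m invmx P.
  have exC : xC = c *m P by rewrite /c mulmxKV.
  have hc : c *m diag_mx (map_mx (horner qC) D) = 0.
    move: hx; rewrite eBC horner_mx_uconjC // horner_mx_diag exC !mulmxA (mulmxK Pu).
    by move/(congr1 (mulmx^~ (invmx P))); rewrite (mulmxK Pu) mul0mx.
  have hci : forall i, c 0 i * qC.[D 0 i] = 0.
    by move=> i; move/matrixP: hc => /(_ 0 i); rewrite mul_mx_diag !mxE.
  have xCt : xC ^t* = map_mx f x^T.
    by apply/matrixP => i j; rewrite !mxE fconj.
  have ctP : xC ^t* = invmx P *m c ^t*.
    by rewrite exC trmx_mul map_mxM iP.
  have q1 : (xC *m BC *m xC ^t*) 0 0 = \sum_i D 0 i * (c 0 i * conjC (c 0 i)).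
    rewrite {1}exC ctP eBC !mulmxA (mulmxK Pu).
    rewrite (mulmxK Pu) mxE; apply: eq_bigr => i _.
    by rewrite mul_mx_diag !mxE mulrCA mulrA.
  have q2 : (xC *m xC ^t*) 0 0 = \sum_i c 0 i * conjC (c 0 i).
    rewrite {1}exC ctP mulmxA (mulmxK Pu) mxE; apply: eq_bigr => i _.
    by rewrite !mxE.
  have r1 : (xC *m BC *m xC ^t*) 0 0 = f ((x *m B *m x^T) 0 0).
    by rewrite xCt /xC /BC -!map_mxM mxE.
  have r2 : (xC *m xC ^t*) 0 0 = f ((x *m x^T) 0 0).
    by rewrite xCt /xC -!map_mxM mxE.
  have [i0 ci0] : exists i0, c 0 i0 != 0.
    case: (pickP (fun i => c 0 i != 0)) => [i0 h|h]; first by exists i0.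
    exfalso; move/negP: xn0; apply; rewrite -(map_mx_eq0 f) -/xC exC.
    have -> : c = 0 by apply/rowP => i; rewrite [RHS]mxE; apply/eqP; apply/negbFE; exact: h.
    by rewrite mul0mx.
  have key : forall i, c 0 i != 0 -> D 0 i < f m.
    move=> i ci; have := hci i; move/eqP; rewrite mulf_eq0 (negbTE ci) /= => /eqP.
    by case/rootqC => j tj ->; rewrite ltcR; apply: lamlt.
  rewrite /f in r1 r2; rewrite -ltcR rmorphM /= -r1 -r2 q1 q2 mulr_sumr.
  rewrite (bigD1 i0) //= [X in _ < X](bigD1 i0) //=.
  apply: ltr_leD.
    by rewrite ltr_pM2r ?mul_conjC_gt0 // key.
  apply: ler_sum => i _; have [->|ci] := eqVneq (c 0 i) 0.
    by rewrite !mul0r !mulr0.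
  by rewrite ler_wpM2r ?mul_conjC_ge0 // ltW // key.
have capS : (0 < \rank (S :&: K))%N.
  have := mxrank_sum_cap S K; have := rank_leq_col (S + K)%MS.
  have := rank_leq_col S; move: rankS rankK; lia.
have [v vcap vn0] : exists2 v : 'rV_n.+1, (v <= S :&: K)%MS & v != 0.
  by apply/rowV0Pn; rewrite -mxrank_eq0 -lt0n.
have vS : (v <= S)%MS by apply: submx_trans vcap (capmxSl _ _).
have vK : (v <= K)%MS by apply: submx_trans vcap (capmxSr _ _).
case/submxP: vS => e ve.
have := Spos e; rewrite /= -ve => h.
by move: (negK v vK vn0); rewrite ltNge h.
Qed.

End Inertia.

Module Aux.
Set Implicit Arguments. Unset Strict Implicit. Unset Printing Implicit Defensive.
Import Order.TTheory GRing.Theory Num.Theory.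
Local Open Scope ring_scope.

Section Vec.
Variable (R : rcfType) (d : nat).
Implicit Types u v : 'cV[R]_d.

Definition dot u v := (u^T *m v) 0 0.

Lemma dotE u v : dot u v = \sum_i u i 0 * v i 0.
Proof. by rewrite /dot mxE; apply: eq_bigr => i _; rewrite mxE. Qed.

Lemma dotC u v : dot u v = dot v u.
Proof. by rewrite !dotE; apply: eq_bigr => i _; rewrite mulrC. Qed.

Lemma dot_ge0 u : 0 <= dot u u.
Proof. by rewrite dotE sumr_ge0 // => i _; rewrite -expr2 sqr_ge0. Qed.

Lemma vnorm_sq u : vnorm u ^+ 2 = dot u u.
Proof.
rewrite /vnorm sqr_sqrtr; last by rewrite sumr_ge0 // => i _; rewrite sqr_ge0.
by rewrite dotE; apply: eq_bigr => i _; rewrite expr2.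
Qed.

Lemma vnorm_ge0 u : 0 <= vnorm u.
Proof. exact: sqrtr_ge0. Qed.

Lemma vnormE u : vnorm u = Num.sqrt (dot u u).
Proof. by rewrite -vnorm_sq sqrtr_sqr ger0_norm ?vnorm_ge0. Qed.

Lemma dot0 u : dot u u = 0 -> u = 0.
Proof.
rewrite dotE => /eqP; rewrite psumr_eq0 => [/allP h|i _]; last by rewrite -expr2 sqr_ge0.
apply/matrixP => i j; rewrite ord1 mxE.
by have := h i (mem_index_enum _); rewrite /= mulf_eq0 orbb => /eqP.
Qed.

Lemma CS u v : dot u v ^+ 2 <= dot u u * dot v v.
Proof.
set a := dot u u; set b := dot u v; set c := dot v v.
have key : 0 <= a * (a * c - b ^+ 2).
  have e : \sum_i (b * u i 0 - a * v i 0) ^+ 2 = b ^+ 2 * (\sum_i u i 0 * u i 0)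
     - 2 * a * b * (\sum_i u i 0 * v i 0) + a ^+ 2 * (\sum_i v i 0 * v i 0).
    rewrite !mulr_sumr -sumrB -big_split /=; apply: eq_bigr => i _; ring.
  rewrite -!dotE -/a -/b -/c in e.
  have : 0 <= \sum_i (b * u i 0 - a * v i 0) ^+ 2 by rewrite sumr_ge0 // => i _; rewrite sqr_ge0.
  by rewrite e => h; apply: le_trans h _; rewrite le_eqVlt; apply/orP; left; apply/eqP; ring.
have [a0|apos] := eqVneq a 0.
  by rewrite /b (dot0 a0) a0 mul0r dotE big1 ?expr0n // => i _; rewrite mxE mul0r.
have agt : 0 < a by rewrite lt_def apos dot_ge0.
by rewrite -subr_ge0 -(pmulr_rge0 _ agt).
Qed.

Lemma dot_abs u v : `|dot u v| <= vnorm u * vnorm v.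
Proof.
rewrite !vnormE -sqrtrM ?dot_ge0 // -sqrtr_sqr ler_sqrt; last by rewrite mulr_ge0 ?dot_ge0.
exact: CS.
Qed.

Lemma dotZl a u v : dot (a *: u) v = a * dot u v.
Proof. by rewrite !dotE mulr_sumr; apply: eq_bigr => i _; rewrite mxE mulrA. Qed.
Lemma dotZr a u v : dot u (a *: v) = a * dot u v.
Proof. by rewrite dotC dotZl dotC. Qed.
Lemma dotDr u v w : dot u (v + w) = dot u v + dot u w.
Proof. by rewrite !dotE -big_split; apply: eq_bigr => i _; rewrite mxE mulrDr. Qed.
Lemma dotBr u v w : dot u (v - w) = dot u v - dot u w.
Proof. by rewrite !dotE -sumrB; apply: eq_bigr => i _; rewrite !mxE mulrBr. Qed.

Lemma vnormZ a u : vnorm (a *: u) = `|a| * vnorm u.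
Proof.
by rewrite !vnormE dotZl dotZr mulrA -expr2 sqrtrM ?sqr_ge0 // sqrtr_sqr.
Qed.

Lemma vnorm0P u : vnorm u = 0 -> u = 0.
Proof.
rewrite vnormE => /eqP; rewrite sqrtr_eq0 => h; apply: dot0.
by apply/eqP; rewrite eq_le h dot_ge0.
Qed.

Lemma vnorm0 : vnorm (0 : 'cV[R]_d) = 0.
Proof. by rewrite vnormE dotE big1 ?sqrtr0 // => i _; rewrite mxE mul0r. Qed.

Lemma spec_bound (E : 'M[R]_d) s : spectral_norm_is E s ->
  forall u, vnorm (E *m u) <= s * vnorm u.
Proof.
move=> [hs1 hs2] u; have [n0|npos] := eqVneq (vnorm u) 0.
  by rewrite (vnorm0P n0) mulmx0 /vnorm !big1 ?sqrtr0 ?mulr0 // => i _; rewrite mxE expr0n.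
have ngt : 0 < vnorm u by rewrite lt_def npos vnorm_ge0.
have : vnorm (E *m ((vnorm u)^-1 *: u)) <= s.
  apply: hs1; exists ((vnorm u)^-1 *: u); split => //.
  by rewrite vnormZ ger0_norm ?invr_ge0 ?vnorm_ge0 // mulVf.
by rewrite -scalemxAr vnormZ ger0_norm ?invr_ge0 ?vnorm_ge0 // mulrC ler_pdivrMr.
Qed.

Lemma quad_bound (E : 'M[R]_d) s : spectral_norm_is E s ->
  forall u, `|dot u (E *m u)| <= s * dot u u.
Proof.
move=> hs u; apply: le_trans (dot_abs _ _) _.
rewrite -vnorm_sq expr2 mulrA [s * _]mulrC -mulrA ler_wpM2l ?vnorm_ge0 //.
exact: spec_bound.
Qed.

End Vec.

Lemma spec_dpos (R : rcfType) d (E : 'M[R]_d) s : spectral_norm_is E s -> (0 < d)%N.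
Proof.
case: d E => // E [_ h]; exfalso.
have : s <= s - 1.
  apply: h => x [v [v1 _]]; exfalso; move: v1.
  by rewrite /vnorm big_ord0 sqrtr0 => /eqP; rewrite eq_sym oner_eq0.
by rewrite -subr_ge0 addrAC subrr add0r oppr_ge0 ler10.
Qed.

Lemma spec_ge0 (R : rcfType) d (E : 'M[R]_d) s : spectral_norm_is E s -> 0 <= s.
Proof.
move=> hs; have dpos := spec_dpos hs; case: hs => h _.
pose e : 'cV[R]_d := delta_mx (Ordinal dpos) 0.
apply: le_trans (h (vnorm (E *m e)) _); first exact: vnorm_ge0.
exists e; split => //.
rewrite /vnorm (bigD1 (Ordinal dpos)) //= big1 => [|j ji].
  by rewrite !mxE !eqxx expr1n addr0 sqrtr1.
by rewrite !mxE (negbTE ji) expr0n.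
Qed.

Lemma sm_tr (R : rcfType) d k (w : 'I_k -> R) (mu : 'I_k -> 'cV[R]_d) :
  (second_moment w mu)^T = second_moment w mu.
Proof.
rewrite /second_moment linear_sum; apply: eq_bigr => j _.
by rewrite linearZ /= trmx_mul trmxK.
Qed.

Lemma sm_quad (R : rcfType) d k (w : 'I_k -> R) (mu : 'I_k -> 'cV[R]_d) u :
  dot u (second_moment w mu *m u) = \sum_l w l * dot u (mu l) ^+ 2.
Proof.
rewrite /second_moment mulmx_suml /dot mulmx_sumr summxE; apply: eq_bigr => l _.
rewrite -scalemxAl -scalemxAr mxE; congr (_ * _).
have -> : u^T *m (mu l *m (mu l)^T *m u) = (u^T *m mu l) *m ((mu l)^T *m u).
  by rewrite !mulmxA.
rewrite [LHS]mxE big_ord1 expr2; congr (_ * _).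
by rewrite -[(mu l)^T *m u]trmxK trmx_mul trmxK [LHS]mxE.
Qed.

Section QSec.
Variables (R : rcfType) (d : nat) (Q : 'M[R]_d).
Hypothesis QtQ : Q^T *m Q = 1%:M.

Lemma QQt : Q *m Q^T = 1%:M.
Proof. exact: mulmx1C. Qed.

Lemma dotQ (a b : 'cV[R]_d) : dot (Q *m a) (Q *m b) = dot a b.
Proof. by rewrite /dot trmx_mul -mulmxA [Q^T *m _]mulmxA QtQ mul1mx. Qed.

Lemma dot_diag (L : 'rV[R]_d) (a : 'cV[R]_d) :
  dot a (diag_mx L *m a) = \sum_i L 0 i * a i 0 ^+ 2.
Proof.
rewrite dotE; apply: eq_bigr => i _; rewrite mul_diag_mx mxE; ring.
Qed.

Variables (S' : 'M[R]_d) (lam' : nat -> R).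
Hypothesis Seig : forall i : 'I_d, S' *m col i Q = lam' i *: col i Q.

Lemma SQ : S' *m Q = Q *m diag_mx (\row_i lam' i).
Proof.
apply/matrixP => a i; rewrite mul_mx_diag !mxE.
rewrite mulrC; transitivity ((S' *m col i Q) a 0).
  by rewrite !mxE; apply: eq_bigr => k _; rewrite !mxE.
by rewrite Seig !mxE.
Qed.

Lemma quadQ (a : 'cV[R]_d) :
  dot (Q *m a) (S' *m (Q *m a)) = \sum_(i < d) lam' i * a i 0 ^+ 2.
Proof.
rewrite mulmxA SQ -mulmxA dotQ dot_diag; apply: eq_bigr => i _; rewrite mxE //.
Qed.

Lemma projE (r : nat) :
  \sum_(i < d | (i < r)%N) col i Q *m (col i Q)^T =
  Q *m diag_mx (\row_i ((i < r)%N)%:R) *m Q^T.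
Proof.
apply/matrixP => a b; rewrite summxE !mxE big_mkcond /=; apply: eq_bigr => i _.
rewrite mul_mx_diag !mxE big_ord1 !mxE; case: (i < r)%N; last by rewrite mulr0 mul0r.
by rewrite mulr1.
Qed.
End QSec.

Lemma inertia_col (R : rcfType) n (B : 'M[R]_n) (lam : nat -> R) (t : nat) (m : R)
  p (S : 'M[R]_(p, n)) :
  B^T = B -> char_poly B = \prod_(i < n) ('X - (lam i)%:P) ->
  (forall i : 'I_n, (t <= i)%N -> lam i < m) -> (t < \rank S)%N ->
  (forall e : 'rV_p, let u := (e *m S)^T in m * dot u u <= dot u (B *m u)) -> False.
Proof.
move=> h1 h2 h3 h4 h5; apply: (Inertia.inertia h1 h2 h3 h4) => e /=.
have := h5 e; rewrite /= /dot trmxK mulmxA //.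
Qed.

Lemma pid_diag (R : rcfType) n r :
  (pid_mx r : 'M[R]_n) = diag_mx (\row_i ((i < r)%N)%:R).
Proof.
apply/matrixP => i j; rewrite !mxE; have [<-|ij] := eqVneq i j.
  by rewrite eqxx mulr1n.
have ij' : (nat_of_ord i == nat_of_ord j) = false by apply/negbTE.
by rewrite ij' /= mulr0n.
Qed.


End Aux.
Import Aux.
Import Inertia.

Theorem mainTheorem5 (R : rcfType) (d k r : nat)
  (w : 'I_k -> R) (mu : 'I_k -> 'cV[R]_d)
  (Sigma' P : 'M[R]_d) (lam : nat -> R) (s W : R) :
  (forall j, 0 <= w j) ->
  \sum_(j < k) w j = 1 ->
  (r <= d)%N ->
  Sigma'^T = Sigma' ->
  eigenvalues_sorted (second_moment w mu) lam ->
  top_eig_proj Sigma' r P ->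
  spectral_norm_is (second_moment w mu - Sigma') s ->
  W2sq_is w mu w (push_atoms P mu) W ->
  W <= k%:R * (lam_next d lam r + 2 * s).
Proof.
move=> w0 w1 rd Ssym [charS lamsort] [Q [lam' [QtQ [Seig [lam'sort Pdef]]]]] hs hW.
set Sig := second_moment w mu in charS hs *.
set E := Sig - Sigma' in hs.
have dpos := spec_dpos hs; have s0 := spec_ge0 hs.
have qb := quad_bound hs.
have Qu : Q \in unitmx by case: (mulmx1_unit QtQ).
have QQ := QQt QtQ.
have splitS : forall u, dot u (Sig *m u) = dot u (Sigma' *m u) + dot u (E *m u).
  by move=> u; rewrite /E mulmxBl dotBr addrC subrK.
have weyl : (r < d)%N -> lam' r - s <= lam r.
  move=> rlt; rewrite leNgt; apply/negP => hlt.
  apply: (@inertia_col R d Sig lam r (lam' r - s) d (pid_mx r.+1 *m Q^T)).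
  - exact: sm_tr.
  - exact: charS.
  - move=> i ri; apply: le_lt_trans hlt; exact: lamsort.
  - by rewrite mxrankMfree ?row_free_unit ?unitmx_tr // rank_pid_mx.
  move=> e /=.
  pose c := (pid_mx r.+1 : 'M[R]_d) *m e^T.
  have eu : (e *m (pid_mx r.+1 *m Q^T))^T = Q *m c.
    by rewrite /c !trmx_mul trmxK tr_pid_mx mulmxA.
  rewrite eu splitS (quadQ QtQ Seig).
  have hc : forall i : 'I_d, (r < i)%N -> c i 0 = 0.
    move=> i ri; rewrite /c pid_diag mul_diag_mx !mxE.
    by rewrite ltnS leqNgt ri mul0r.
  have h1 : (lam' r) * dot (Q *m c) (Q *m c) <= \sum_(i < d) lam' i * c i 0 ^+ 2.
    rewrite dotQ // dotE mulr_sumr; apply: ler_sum => i _.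
    have [ri|ir] := ltnP r i; first by rewrite hc // !expr0n /= !mulr0.
    rewrite -expr2 ler_wpM2r ?sqr_ge0 //.
    exact: (lam'sort i (Ordinal rlt) ir).
  have h2 : - (s * dot (Q *m c) (Q *m c)) <= dot (Q *m c) (E *m (Q *m c)).
    by have := qb (Q *m c); rewrite ler_norml => /andP [].
  rewrite mulrBl; lra.
have Sig_ge0 : forall u, 0 <= dot u (Sig *m u).
  move=> u; rewrite sm_quad sumr_ge0 // => l _; by rewrite mulr_ge0 ?sqr_ge0.
have lam_ge0 : (r < d)%N -> 0 <= lam r.
  move=> rlt; rewrite leNgt; apply/negP => hlt.
  apply: (@inertia_col R d Sig lam r 0 d 1%:M).
  - exact: sm_tr.
  - exact: charS.
  - move=> i ri; apply: le_lt_trans hlt; exact: lamsort.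
  - by rewrite mxrank1.
  by move=> e /=; rewrite mul0r.
have L0 : 0 <= lam_next d lam r + 2 * s.
  rewrite /lam_next; case: ifP => [rlt|_]; last by rewrite add0r mulr_ge0.
  by rewrite addr_ge0 ?mulr_ge0 // lam_ge0.
have Pmat : P = Q *m diag_mx (\row_i ((i < r)%N)%:R) *m Q^T by rewrite Pdef projE.
have term : forall j, w j * vnorm (mu j - P *m mu j) ^+ 2 <= lam_next d lam r + 2 * s.
  move=> j.
  pose c := Q^T *m mu j.
  pose c' := diag_mx (\row_i ((r <= i)%N)%:R) *m c.
  have ey : mu j - P *m mu j = Q *m c'.
    have emu : mu j = Q *m c by rewrite /c mulmxA QQ mul1mx.
    rewrite Pmat -!mulmxA -/c {1}emu -mulmxBr; congr (_ *m _).
    apply/matrixP => i l; rewrite /c' !mul_diag_mx !mxE.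
    case: ltnP => ir /=; first by rewrite mul1r subrr mul0r.
    by rewrite mul0r subr0 mul1r.
  rewrite vnorm_sq ey dotQ //.
  set a := dot c' c'.
  have a0 : 0 <= a by apply: dot_ge0.
  have [a_eq0|a_neq0] := eqVneq a 0; first by rewrite a_eq0 mulr0.
  have agt : 0 < a by rewrite lt_def a_neq0 a0.
  have rlt : (r < d)%N.
    rewrite ltnNge; apply/negP => dr; move/eqP: a_neq0; apply.
    rewrite /a dotE big1 // => i _; rewrite /c' mul_diag_mx !mxE.
    by rewrite leqNgt (leq_trans (ltn_ord i) dr) /= mul0r mul0r.
  rewrite /lam_next rlt.
  have hya : dot (Q *m c') (mu j) = a.
    rewrite -[mu j]mul1mx -QQ -mulmxA -/c dotQ // /a !dotE; apply: eq_bigr => i _.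
    rewrite /c' !mul_diag_mx !mxE; case: (r <= i)%N => /=.
      by rewrite !mul1r.
    by rewrite !mul0r.
  have low : w j * a ^+ 2 <= dot (Q *m c') (Sig *m (Q *m c')).
    rewrite sm_quad (bigD1 j) //= hya ler_wpDr // sumr_ge0 // => l _.
    by rewrite mulr_ge0 ?sqr_ge0.
  have up1 : dot (Q *m c') (Sigma' *m (Q *m c')) <= lam' r * a.
    rewrite (quadQ QtQ Seig) /a dotE mulr_sumr; apply: ler_sum => i _.
    have [ir|ri] := ltnP i r.
      by rewrite /c' mul_diag_mx !mxE leqNgt ir /= !mul0r expr0n /= mulr0 mulr0.
    rewrite -expr2 ler_wpM2r ?sqr_ge0 //.
    exact: (lam'sort (Ordinal rlt) i ri).
  have up2 : dot (Q *m c') (E *m (Q *m c')) <= s * a.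
    by have := qb (Q *m c'); rewrite dotQ // => /(le_trans (ler_norm _)).
  have wy := weyl rlt.
  have key : w j * a * a <= (lam r + 2 * s) * a.
    rewrite -mulrA -expr2; apply: le_trans low _; rewrite splitS.
    have : lam' r * a <= (lam r + s) * a by rewrite ler_wpM2r //; lra.
    lra.
  by rewrite -(ler_pM2r agt).
have Wle : W <= \sum_j w j * vnorm (mu j - P *m mu j) ^+ 2.
  case: hW => h _; apply: h.
  exists (fun i j => if i == j then w i else 0); split.
    split; first by move=> i j; case: (i == j).
    split.
      move=> x; apply: eq_bigr => i _.
      rewrite (bigD1 i) //= eqxx big1 ?addr0 // => l li.
      by rewrite eq_sym (negbTE li).
    move=> y; apply: eq_bigr => l _.
    rewrite (bigD1 l) //= eqxx big1 ?addr0 // => i il.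
    by rewrite (negbTE il).
  apply: eq_bigr => i _.
  rewrite (bigD1 i) //= eqxx big1 ?addr0 // => l li.
  by rewrite eq_sym (negbTE li) mul0r.
apply: le_trans Wle _.
apply: le_trans (ler_sum _ (fun j _ => term j)) _.
by rewrite sumr_const card_ord [X in _ <= X]mulrC mulr_natr.
Qed.
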